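(* Let $\mathbf{C}$ be a category all of whose morphisms are monomorphisms, enriched over $\mathbf{Top}$ with all homsets Hausdorff, and let $\mathbf{D}$ be a full subcategory of $\mathbf{C}$ which is a skeletal category of finite objects. Let $S \in \mathrm{Ob}(\mathbf{C})$ be universal for $\mathbf{D}$, and for each $B \in \mathrm{Ob}(\mathbf{D})$ fix a morphism $\iota_B \in \hom(B,S)$. Assume that $T_\mathbf{C}(A,S) < \infty$ for all $A \in \mathrm{Ob}(\mathbf{D})$ and that $S$ is approximable in $\mathbf{D}$ via $F : \mathrm{Ob}(\mathbf{D}) \to \mathrm{Ob}(\mathbf{D})$ and $(\Phi_A)_{A\in\mathrm{Ob}(\mathbf{D})}$. Then for every $A \in \mathrm{Ob}(\mathbf{D})$ there is an $n \in \mathbb{N}$ such that for every $k \in \mathbb{N}$ and every coloring $\chi : \bigcup_{B\in\mathrm{Ob}(\mathbf{D})} \hom(A,B) \to k$ there is $h \in \hom(S,S)$ satisfying $$\Big|\chi\Big(\bigcup_{B \in \mathrm{Ob}(\mathbf{D})} h \star \hom(A,B)\Big)\Big| \le n,$$ where for $h \in \hom(S,S)$ and $f \in \hom(A,B)$ with $A,B\in\mathrm{Ob}(\mathbf{D})$ we set $h \star f = \Phi_B(h\cdot\iota_{F(B)})\cdot f$.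
   Context: A category is enriched over $\mathbf{Top}$ if each homset is a topological space and composition is continuous. Skeletal: no two distinct objects are isomorphic. A category of finite objects is a locally small directed category whose morphisms are monomorphisms, whose skeleton has at most countably many objects, and in whose skeleton every object is the codomain of only finitely many morphisms. $S$ is universal for $\mathbf{D}$ if $\hom_\mathbf{C}(D,S)\neq\varnothing$ for every $D\in\mathrm{Ob}(\mathbf{D})$. $S$ is approximable in $\mathbf{D}$ via $F$ and $(\Phi_A)$ if each $\Phi_A:\hom_\mathbf{C}(F(A),S)\to\bigcup_{C\in\mathrm{Ob}(\mathbf{D})}\hom_\mathbf{D}(A,C)$ is Borel (preimages of open subsets of each $\hom_\mathbf{D}(A,C)$ are Borel) and for all $A,B\in\mathrm{Ob}(\mathbf{D})$, $f\in\hom_\mathbf{D}(A,B)$, $u\in\hom_\mathbf{C}(F(B),S)$ there is $f'\in\hom_\mathbf{D}(F(A),F(B))$ with $\Phi_A(u\cdot f')=\Phi_B(u)\cdot f$. $T_\mathbf{C}(X,S)$ (big embedding Ramsey degree) is the least positive integer $n$ such that for every $k\ge2$ and every Borel coloring $\chi:\hom_\mathbf{C}(X,S)\to\{0,\dots,k-1\}$ (all fibers Borel) there is $w\in\hom(S,S)$ with $|\chi(w\cdot\hom(X,S))|\le n$; $\infty$ if none. $h\star\hom(A,B)=\{h\star f: f\in\hom(A,B)\}$. *)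

(* Defs.v *)
From HB Require Import structures.
From mathcomp Require Import all_boot all_order all_algebra.
From mathcomp Require Import all_classical all_reals all_analysis.
From Stdlib Require List.
Set Implicit Arguments.
Unset Strict Implicit.
Unset Printing Implicit Defensive.
Local Open Scope classical_set_scope.

Definition Borel (X : topologicalType) (A : set X) : Prop :=
  <<s [set: X], @open X >> A.

Record TopCat := {
  Obj :> Type;
  Mor : Obj -> Obj -> topologicalType;
  comp : forall A B C : Obj, Mor B C -> Mor A B -> Mor A C;
  idm : forall A : Obj, Mor A A;
  compA : forall (A B C D : Obj) (h : Mor C D) (g : Mor B C) (f : Mor A B),
      comp h (comp g f) = comp (comp h g) f;
  comp1m : forall (A B : Obj) (f : Mor A B), comp (idm B) f = f;
  compm1 : forall (A B : Obj) (f : Mor A B), comp f (idm A) = f;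
  comp_cont : forall A B C : Obj,
      continuous (fun p : Mor B C * Mor A B => comp p.1 p.2)
}.

Arguments comp {t A B C}.
Arguments idm {t}.

Definition all_mono (C : TopCat) : Prop :=
  forall (A B X : C) (g : Mor B X) (f1 f2 : Mor A B), comp g f1 = comp g f2 -> f1 = f2.

Definition hausdorff_homs (C : TopCat) : Prop :=
  forall A B : C, hausdorff_space (Mor A B).

(* A full subcategory D of C is given by its class of objects (predicate inD);
   its homsets are those of C (with the same topology). *)
Definition DObj (C : TopCat) (inD : C -> Prop) := {A : C | inD A}.

Definition isomorphic (C : TopCat) (A B : C) : Prop :=
  exists (f : Mor A B) (g : Mor B A), comp g f = idm A /\ comp f g = idm B.

Definition skeletal (C : TopCat) (inD : C -> Prop) : Prop :=
  forall A B : DObj inD, isomorphic (sval A) (sval B) -> sval A = sval B.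

Definition directed (C : TopCat) (inD : C -> Prop) : Prop :=
  forall A B : DObj inD, exists X : DObj inD,
    inhabited (Mor (sval A) (sval X)) /\ inhabited (Mor (sval B) (sval X)).

(* D is a category of finite objects (D is assumed skeletal, so D is its own
   skeleton; local smallness is automatic here; monomorphisms are inherited from C). *)
Definition finite_objects_cat (C : TopCat) (inD : C -> Prop) : Prop :=
  [/\ directed inD,
      (forall (A B X : DObj inD) (g : Mor (sval B) (sval X)) (f1 f2 : Mor (sval A) (sval B)),
          comp g f1 = comp g f2 -> f1 = f2),
      (exists e : DObj inD -> nat, injective e) &
      (forall B : DObj inD, exists s : list {A : DObj inD & Mor (sval A) (sval B)},
          forall p, List.In p s)].

Definition universal (C : TopCat) (inD : C -> Prop) (S : C) : Prop :=
  forall D : DObj inD, inhabited (Mor (sval D) S).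

Definition homsD (C : TopCat) (inD : C -> Prop) (A : DObj inD) :=
  {X : DObj inD & Mor (sval A) (sval X)}.

Definition post (C : TopCat) (inD : C -> Prop) (A B : DObj inD)
  (p : homsD B) (f : Mor (sval A) (sval B)) : homsD A :=
  existT _ (projT1 p) (comp (projT2 p) f).

Definition approximable (C : TopCat) (inD : C -> Prop) (S : C)
  (F : DObj inD -> DObj inD)
  (Phi : forall A : DObj inD, Mor (sval (F A)) S -> homsD A) : Prop :=
  (forall (A X : DObj inD) (U : set (Mor (sval A) (sval X))), open U ->
     Borel [set u | exists g, U g /\ Phi A u = existT _ X g])
  /\
  (forall (A B : DObj inD) (f : Mor (sval A) (sval B)) (u : Mor (sval (F B)) S),
     exists f' : Mor (sval (F A)) (sval (F B)),
       Phi A (comp u f') = post (Phi B u) f).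

Definition Borel_coloring (C : TopCat) (X S : C) (k : nat) (chi : Mor X S -> 'I_k) : Prop :=
  forall i : 'I_k, Borel [set f | chi f = i].

Definition big_degree_bound (C : TopCat) (X S : C) (n : nat) : Prop :=
  forall k : nat, (2 <= k)%N -> forall chi : Mor X S -> 'I_k, Borel_coloring chi ->
    exists w : Mor S S,
      (#|[set i : 'I_k | `[< exists f : Mor X S, chi (comp w f) = i >]]| <= n)%N.

Definition big_degree_finite (C : TopCat) (X S : C) : Prop :=
  exists n : nat, (0 < n)%N /\ big_degree_bound X S n.

Definition star (C : TopCat) (inD : C -> Prop) (S : C)
  (F : DObj inD -> DObj inD)
  (Phi : forall A : DObj inD, Mor (sval (F A)) S -> homsD A)
  (iota : forall B : DObj inD, Mor (sval B) S)
  (h : Mor S S) (A B : DObj inD) (f : Mor (sval A) (sval B)) : homsD A :=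
  post (Phi B (comp h (iota (F B)))) f.

(* Main.v *)
Require Import Defs.
From HB Require Import structures.
From mathcomp Require Import all_boot all_order all_algebra.
From mathcomp Require Import all_classical all_reals all_analysis.
From Stdlib Require Import Eqdep List.
Local Open Scope classical_set_scope.

Section Helpers.
Variables (C : TopCat) (inD : C -> Prop).

Lemma discrete_hom (A X : DObj inD)
  (s : list {A0 : DObj inD & Mor (sval A0) (sval X)}) :
  hausdorff_space (Mor (sval A) (sval X)) ->
  (forall p, List.In p s) ->
  forall U : set (Mor (sval A) (sval X)), open U.
Proof.
move=> /hausdorff_accessible hacc hs U.
have key : forall g : Mor (sval A) (sval X), forall l : list {A0 : DObj inD & Mor (sval A0) (sval X)},
  exists V : set (Mor (sval A) (sval X)), [/\ open V, V g &
    forall p g', List.In p l -> p = existT _ A g' -> g' <> g -> ~ V g'].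
  move=> g; elim=> [|p l [V [oV Vg HV]]].
    by exists setT; split; [exact: openT| by [] | by move=> p g' []].
  case: (pselect (exists g', p = existT _ A g' /\ g' <> g)).
    move=> [g' [pe ng]].
    have /hacc [W [oW Wg Wg']] : g != g' by apply/eqP => e; apply: ng.
    exists (V `&` W); split.
    - exact: openI.
    - by split => //; rewrite -inE.
    move=> q g'' /= [<-|inl] e ne [Vg'' Wg''].
      rewrite pe in e; have e2 := inj_pair2 _ _ _ _ _ e; subst g''.
      by move: Wg'; rewrite inE /= => /(_ Wg'').
    exact: (HV q g'' inl e ne).
  move=> nex; exists V; split => // q g'' /= [<-|inl] e ne Vg''.
    by apply: nex; exists g''.
  exact: (HV q g'' inl e ne).
rewrite openE => g Ug.
have [V [oV Vg HV]] := key g s.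
rewrite /interior; apply: (@filterS _ _ _ V).
  move=> g' Vg'; case: (pselect (g' = g)) => [->//|ne].
  by exfalso; apply: (HV (existT _ A g') g' (hs _) erefl ne Vg').
exact: open_nbhs_nbhs.
Qed.

End Helpers.

Theorem theorem6p3 (C : TopCat) (inD : C -> Prop) (S : C)
  (iota : forall B : DObj inD, Mor (sval B) S)
  (F : DObj inD -> DObj inD)
  (Phi : forall A : DObj inD, Mor (sval (F A)) S -> homsD A) :
  all_mono C ->
  hausdorff_homs C ->
  skeletal inD ->
  finite_objects_cat inD ->
  universal inD S ->
  (forall A : DObj inD, big_degree_finite (sval A) S) ->
  @approximable C inD S F Phi ->
  forall A : DObj inD, exists n : nat, forall (k : nat) (chi : homsD A -> 'I_k),
    exists h : Mor S S,
      (#|[set i : 'I_k | `[< exists (B : DObj inD) (f : Mor (sval A) (sval B)),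
                              chi (@star C inD S F Phi iota h A B f) = i >]]| <= n)%N.
Proof.
move=> _ haus _ [_ _ [e einj] fin] _ deg [PhiB PhiC] A.
have [n [n0 bnd]] := deg (F A).
exists n => k chi.
case: (leqP 2 k) => k2; last first.
  exists (idm S); apply: (leq_trans (max_card _)); rewrite card_ord.
  by apply: (leq_trans _ n0); rewrite -ltnS.
pose chi' := fun u : Mor (sval (F A)) S => chi (Phi A u).
have Bc : Borel_coloring chi'.
  move=> i.
  pose T := fun m : nat => [set u : Mor (sval (F A)) S | exists X : DObj inD, e X = m /\
      exists g, chi (existT _ X g) = i /\ Phi A u = existT _ X g].
  have -> : [set f | chi' f = i] = \bigcup_m T m.
    apply/seteqP; split => u /=.
      move=> cu; case E: (Phi A u) => [X g].
      exists (e X) => //; exists X; split => //; exists g; split => //.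
      by rewrite -cu /chi' E.
    move=> [m _ [X [_ [g [<- E]]]]]; by rewrite /chi' E.
  apply: sigma_algebra_bigcup => m.
  case: (pselect (exists X : DObj inD, e X = m)) => [[X eX]|nX]; last first.
    have -> : T m = set0.
      by apply/seteqP; split => u //= [X [eX _]]; exfalso; apply: nX; exists X.
    exact: sigma_algebra0.
  have -> : T m = [set u | exists g, [set g | chi (existT _ X g) = i] g /\ Phi A u = existT _ X g].
    apply/seteqP; split => u /=.
      move=> [Y [eY [g [cg E]]]].
      have eXY : X = Y by apply: einj; rewrite eX eY.
      by subst Y; exists g.
    by move=> [g [cg E]]; exists X; split => //; exists g.
  apply: PhiB.
  have [s hs] := fin X.
  exact: (@discrete_hom C inD A X s (haus _ _) hs).
have [w hw] := bnd k k2 chi' Bc.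
exists w; apply: (leq_trans _ hw); apply: subset_leq_card.
apply/fintype.subsetP => i; rewrite !inE => /asboolP [B [f <-]].
apply/asboolP.
have [f' Hf'] := PhiC A B f (Defs.comp w (iota (F B))).
exists (Defs.comp (iota (F B)) f'); rewrite /chi' /star -Hf'.
by rewrite Defs.compA.
Qed.
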